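(* Let $a>0$, $b>0$, $q\in(0,1)$ and $t>1$. Then \[ a\gamma - b\ln(1-q) + a\psi(t) - b\psi_q(t) > 0 . \]
   Context: $\gamma$ denotes the Euler–Mascheroni constant and $\psi(t)=\Gamma'(t)/\Gamma(t)$ is the digamma function for $t>0$, where $\Gamma$ is Euler's Gamma function. For $q\in(0,1)$ and $t>0$, the $q$-Gamma function is $\Gamma_q(t)=(1-q)^{1-t}\prod_{n=1}^{\infty}\frac{1-q^n}{1-q^{t+n}}$, and $\psi_q(t)=\frac{d}{dt}\ln\Gamma_q(t)=\Gamma_q'(t)/\Gamma_q(t)$. *)

(* Defs.v *)
From Stdlib Require Import Reals.
From Coquelicot Require Import Coquelicot.
Open Scope R_scope.

Definition Gamma (t : R) : R :=
  RInt_gen (fun x => Rpower x (t - 1) * exp (- x)) (at_right 0) (Rbar_locally p_infty).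

Definition digamma (t : R) : R := Derive (fun s => ln (Gamma s)) t.

Definition euler_gamma : R :=
  real (Lim_seq (fun n => sum_f_R0 (fun k => / INR (S k)) n - ln (INR (S n)))).

Fixpoint qGamma_partial (q t : R) (N : nat) : R :=
  match N with
  | O => 1
  | S M => qGamma_partial q t M *
           ((1 - q ^ (S M)) / (1 - Rpower q (t + INR (S M))))
  end.

Definition qGamma (q t : R) : R :=
  Rpower (1 - q) (1 - t) * real (Lim_seq (qGamma_partial q t)).

Definition qdigamma (q t : R) : R := Derive (fun s => ln (qGamma q s)) t.

(* Main.v *)
Require Import Defs.
From Stdlib Require Import Reals Lra Lia Psatz Classical.
From Coquelicot Require Import Coquelicot.
Open Scope R_scope.

Lemma exp_le' x y : x <= y -> exp x <= exp y.
Proof. intros [H|H]; [left; now apply exp_increasing | subst; lra]. Qed.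

Lemma ln_le_sub1 y : 0 < y -> ln y <= y - 1.
Proof. intros Hy. pose proof (exp_ineq1_le (ln y)). rewrite exp_ln in H; lra. Qed.

Lemma real_Lim_bounds (u : nat -> R) a b :
  (forall n, a <= u n <= b) ->
  Lim_seq u = Finite (real (Lim_seq u)) /\ a <= real (Lim_seq u) <= b.
Proof.
  intros H.
  assert (H1 := Lim_seq_le_loc (fun _ => a) u (ex_intro _ 0%nat (fun n _ => proj1 (H n)))).
  assert (H2 := Lim_seq_le_loc u (fun _ => b) (ex_intro _ 0%nat (fun n _ => proj2 (H n)))).
  rewrite Lim_seq_const in H1; rewrite Lim_seq_const in H2.
  destruct (Lim_seq u); simpl in *; try tauto; split; auto.
Qed.

Lemma real_Lim_le (u : nat -> R) C : 0 <= C -> (forall n, u n <= C) -> real (Lim_seq u) <= C.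
Proof.
  intros HC H.
  assert (H2 := Lim_seq_le_loc u (fun _ => C) (ex_intro _ 0%nat (fun n _ => H n))).
  rewrite Lim_seq_const in H2.
  destruct (Lim_seq u); simpl in *; lra.
Qed.

Lemma real_Lim_le2 (u v : nat -> R) a b :
  (forall n, a <= u n <= b) -> (forall n, a <= v n <= b) -> (forall n, u n <= v n) ->
  real (Lim_seq u) <= real (Lim_seq v).
Proof.
  intros Hu Hv H.
  destruct (real_Lim_bounds u a b Hu) as [Eu _].
  destruct (real_Lim_bounds v a b Hv) as [Ev _].
  assert (H2 := Lim_seq_le_loc u v (ex_intro _ 0%nat (fun n _ => H n))).
  rewrite Eu, Ev in H2. simpl in H2. exact H2.
Qed.

Section Q.
Variable q : R.
Hypothesis Hq : 0 < q < 1.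

Lemma Rpower_q_le s1 s2 : s1 <= s2 -> Rpower q s2 <= Rpower q s1.
Proof.
  intros H. unfold Rpower. apply exp_le'.
  assert (ln q < 0) by (rewrite <- ln_1; apply ln_increasing; lra).
  nra.
Qed.

Lemma qfac_bounds s n : 0 < s ->
  1 - q ^ (S n) <= (1 - q ^ (S n)) / (1 - Rpower q (s + INR (S n))) <= 1.
Proof.
  intros Hs.
  assert (E : Rpower q (s + INR (S n)) = Rpower q s * q ^ S n).
  { rewrite Rpower_plus, Rpower_pow; lra. }
  assert (Hp : 0 < q ^ S n < 1).
  { split. apply pow_lt; lra. apply pow_lt_1_compat; [lra| lia]. }
  assert (Hr : 0 < Rpower q s < 1).
  { split. apply exp_pos. rewrite <- (Rpower_O q) by lra. 
    assert (ln q < 0) by (rewrite <- ln_1; apply ln_increasing; lra).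
    unfold Rpower; apply exp_increasing; nra. }
  rewrite E.
  assert (0 < Rpower q s * q ^ S n < q ^ S n) by nra.
  split.
  - apply Rmult_le_reg_r with (1 - Rpower q s * q ^ S n); [lra|].
    unfold Rdiv; rewrite Rmult_assoc, Rinv_l; nra.
  - apply Rmult_le_reg_r with (1 - Rpower q s * q ^ S n); [lra|].
    unfold Rdiv; rewrite Rmult_assoc, Rinv_l; nra.
Qed.

Lemma one_minus_exp x : 0 <= x < 1 -> exp (- x / (1 - x)) <= 1 - x.
Proof.
  intros Hx. set (y := / (1 - x)).
  assert (Hy : 0 < y) by (apply Rinv_0_lt_compat; lra).
  assert (E : - x / (1 - x) = - (y - 1)).
  { unfold y. field. lra. }
  rewrite E, exp_Ropp.
  assert (y <= exp (y - 1)) by (pose proof (exp_ineq1_le (y-1)); lra).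
  assert (1 - x = / y) by (unfold y; rewrite Rinv_inv; auto).
  rewrite H0. apply Rinv_le_contravar; lra.
Qed.

Lemma pow_le_one x n : 0 <= x <= 1 -> x ^ n <= 1.
Proof. intros H. induction n; simpl; nra. Qed.

Lemma partial_lower s N : 0 < s ->
  exp (- (q - q ^ (S N)) / (1 - q) ^ 2) <= qGamma_partial q s N.
Proof.
  intros Hs. induction N.
  - simpl. replace (- (q - q * 1) / ((1 - q) * ((1 - q) * 1))) with 0 by (field; lra).
    rewrite exp_0; lra.
  - cbn [qGamma_partial].
    destruct (qfac_bounds s N Hs) as [F1 F2].
    set (x := q ^ S N) in *.
    assert (Hp : 0 < x <= q).
    { split. apply pow_lt; lra. unfold x; simpl. assert (q^N <= 1) by (apply pow_le_one; lra). nra. }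
    assert (E : - (q - q ^ S (S N)) / (1 - q) ^ 2 =
                - (q - x) / (1 - q) ^ 2 + - x / (1 - q)).
    { unfold x. simpl. field. lra. }
    rewrite E, exp_plus.
    assert (exp (- x / (1 - q)) <= 1 - x).
    { eapply Rle_trans; [|apply one_minus_exp; lra].
      apply exp_le'. unfold Rdiv.
      assert (/(1-x) <= /(1-q)) by (apply Rinv_le_contravar; lra). nra. }
    apply Rmult_le_compat; try (left; apply exp_pos); try lra.
Qed.

Lemma partial_bounds s N : 0 < s ->
  exp (- q / (1 - q) ^ 2) <= qGamma_partial q s N <= 1.
Proof.
  intros Hs. split.
  - eapply Rle_trans; [|apply partial_lower; auto].
    apply exp_le'. unfold Rdiv. apply Rmult_le_compat_r.
    + left; apply Rinv_0_lt_compat; apply pow_lt; lra.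
    + assert (0 < q ^ S N) by (apply pow_lt; lra). lra.
  - induction N; cbn [qGamma_partial]; [lra|].
    destruct (qfac_bounds s N Hs) as [F1 F2].
    assert (0 <= qGamma_partial q s N).
    { eapply Rle_trans; [left; apply exp_pos|]. apply (partial_lower s N Hs). }
    assert (0 <= 1 - q ^ S N) by (pose proof (pow_le_one q (S N)); lra).
    nra.
Qed.

Lemma partial_mono s1 s2 N : 0 < s1 -> s1 <= s2 ->
  qGamma_partial q s2 N <= qGamma_partial q s1 N.
Proof.
  intros H1 H2. induction N; cbn [qGamma_partial]; [lra|].
  assert (0 <= qGamma_partial q s2 N).
  { eapply Rle_trans; [left; apply exp_pos|]. apply (partial_lower s2 N); lra. }
  apply Rmult_le_compat; auto.
  - destruct (qfac_bounds s2 N) as [F1 F2]; [lra|].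
    pose proof (pow_le_one q (S N)). lra.
  - assert (Hp : 0 < q ^ S N) by (apply pow_lt; lra).
    assert (Ht : Rpower q (s2 + INR (S N)) <= Rpower q (s1 + INR (S N))) by (apply Rpower_q_le; lra).
    assert (Hd : 0 < 1 - Rpower q (s1 + INR (S N))).
    { destruct (qfac_bounds s1 N) as [F1 F2]; [lra|].
      rewrite Rpower_plus, Rpower_pow; [|lra].
      assert (0 < Rpower q s1 < 1).
      { split. apply exp_pos. rewrite <- (Rpower_O q) by lra.
        assert (ln q < 0) by (rewrite <- ln_1; apply ln_increasing; lra).
        unfold Rpower; apply exp_increasing; nra. }
      pose proof (pow_le_one q (S N)). nra. }
    pose proof (pow_le_one q (S N)).
    unfold Rdiv. apply Rmult_le_compat_l; [lra|].
    apply Rinv_le_contravar; lra.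
Qed.

Definition P s := real (Lim_seq (qGamma_partial q s)).

Lemma P_bounds s : 0 < s -> exp (- q / (1 - q) ^ 2) <= P s <= 1.
Proof. intros Hs. apply (real_Lim_bounds _ _ _ (fun N => partial_bounds s N Hs)). Qed.
End Q.

Lemma ln_qGamma q s : 0 < q < 1 -> 0 < s -> ln (qGamma q s) = (1 - s) * ln (1 - q) + ln (P q s).
Proof.
  intros Hq Hs. unfold qGamma. fold (P q s).
  destruct (P_bounds q Hq s Hs) as [H1 _].
  rewrite ln_mult. rewrite ln_Rpower. reflexivity.
  apply exp_pos. eapply Rlt_le_trans; [apply exp_pos| exact H1].
Qed.

Lemma qdigamma_le q t : 0 < q < 1 -> 0 < t -> qdigamma q t <= - ln (1 - q).
Proof.
  intros Hq Ht. unfold qdigamma, Derive, Lim.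
  assert (HL : ln (1 - q) < 0) by (rewrite <- ln_1; apply ln_increasing; lra).
  apply real_Lim_le; [lra|].
  intro n. simpl Rbar_loc_seq.
  set (h := 0 + / (INR n + 1)).
  assert (Hh : 0 < h) by (unfold h; assert (0 <= INR n) by apply pos_INR;
     rewrite Rplus_0_l; apply Rinv_0_lt_compat; lra).
  rewrite (ln_qGamma q (t+h)), (ln_qGamma q t) by lra.
  destruct (P_bounds q Hq t) as [A1 A2]; [lra|].
  destruct (P_bounds q Hq (t+h)) as [B1 B2]; [lra|].
  assert (ln (P q (t + h)) <= ln (P q t)).
  { apply ln_le. eapply Rlt_le_trans; [apply exp_pos| exact B1].
    unfold P. apply (real_Lim_le2 _ _ (exp (- q / (1 - q) ^ 2)) 1).
    intro N; apply partial_bounds; lra. intro N; apply partial_bounds; lra.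
    intro N; apply partial_mono; lra. }
  apply Rmult_le_reg_r with h; [lra|].
  unfold Rdiv. rewrite Rmult_assoc, Rinv_l by lra. nra.
Qed.

Lemma exR (f : R -> R) a b : (forall s, Rmin a b <= s <= Rmax a b -> continuous f s) -> ex_RInt f a b.
Proof. intros; apply (ex_RInt_continuous (V:=R_CompleteNormedModule)); auto. Qed.

Section Gen.
Variable f : R -> R.
Hypothesis Hc : forall s, 0 < s -> continuous f s.
Hypothesis Hp : forall s, 0 < s -> 0 <= f s.

Lemma exR_pos a b : 0 < a -> 0 < b -> ex_RInt f a b.
Proof.
  intros Ha Hb. apply exR. intros s Hs. apply Hc.
  assert (0 < Rmin a b) by (apply Rmin_glb_lt; auto). lra.
Qed.

Lemma RInt_mono a a0 b0 b : 0 < a -> a <= a0 -> a0 <= b0 -> b0 <= b ->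
  RInt f a0 b0 <= RInt f a b.
Proof.
  intros Ha H1 H2 H3.
  rewrite <- (RInt_Chasles f a a0 b) by (apply exR_pos; lra).
  rewrite <- (RInt_Chasles f a0 b0 b) by (apply exR_pos; lra).
  assert (0 <= RInt f a a0) by (apply RInt_ge_0; auto; [apply exR_pos; lra| intros; apply Hp; lra]).
  assert (0 <= RInt f b0 b) by (apply RInt_ge_0; auto; [apply exR_pos; lra| intros; apply Hp; lra]).
  simpl. unfold plus; simpl. lra.
Qed.

Lemma gen_exists M :
  (forall a b, 0 < a -> a < b -> RInt f a b <= M) ->
  exists l, is_RInt_gen f (at_right 0) (Rbar_locally p_infty) l /\
    (forall a b, 0 < a -> a < b -> RInt f a b <= l) /\
    (forall M', (forall a b, 0 < a -> a < b -> RInt f a b <= M') -> l <= M').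
Proof.
  intros HM.
  set (E := fun y => exists a b, 0 < a /\ a < b /\ y = RInt f a b).
  assert (HE1 : bound E).
  { exists M. intros y [a [b [H1 [H2 ->]]]]. apply HM; auto. }
  assert (HE2 : exists y, E y).
  { exists (RInt f 1 2). exists 1, 2. repeat split; lra. }
  destruct (completeness E HE1 HE2) as [l [Hub Hleast]].
  exists l. split; [|split].
  - intros P [eps Heps]. simpl in Heps.
    destruct (classic (exists a0 b0, 0 < a0 /\ a0 < b0 /\ l - eps < RInt f a0 b0)) as
      [[a0 [b0 [Ha0 [Hab0 Hlt]]]] | Hno].
    + apply Filter_prod with (fun a => 0 < a < a0) (fun b => b0 < b).
      * exists (mkposreal a0 Ha0). intros y Hy Hy0. simpl in Hy.
        unfold ball in Hy; simpl in Hy; unfold AbsRing_ball, abs, minus, plus, opp in Hy; simpl in Hy.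
        rewrite Ropp_0, Rplus_0_r in Hy. apply Rabs_def2 in Hy. lra.
      * exists b0. auto.
      * intros a b Ha Hb. simpl. exists (RInt f a b). split.
        { apply (RInt_correct (V:=R_CompleteNormedModule)). apply exR_pos; lra. }
        apply Heps.
        assert (RInt f a b <= l) by (apply Hub; exists a, b; repeat split; lra).
        assert (RInt f a0 b0 <= RInt f a b) by (apply RInt_mono; lra).
        unfold ball; simpl; unfold AbsRing_ball, abs, minus, plus, opp; simpl.
        apply Rabs_def1; destruct eps; simpl in *; lra.
    + exfalso.
      assert (l <= l - eps).
      { apply Hleast. intros y [a [b [H1 [H2 ->]]]].
        apply Rnot_lt_le. intro Hc'. apply Hno. exists a, b. auto. }
      destruct eps; simpl in *; lra.
  - intros a b Ha Hb. apply Hub. exists a, b. auto.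
  - intros M' HM'. apply Hleast. intros y [a [b [H1 [H2 ->]]]]. apply HM'; auto.
Qed.
End Gen.

Definition gi x s := Rpower s (x - 1) * exp (- s).

Lemma gi_cont x s : 0 < s -> continuous (gi x) s.
Proof.
  intros Hs. apply (ex_derive_continuous (K:=R_AbsRing) (V:=R_NormedModule)). unfold gi, Rpower.
  auto_derive. exact Hs.
Qed.

Lemma gi_pos x s : 0 <= gi x s.
Proof. unfold gi, Rpower. left. apply Rmult_lt_0_compat; apply exp_pos. Qed.





Lemma gi_bound x s : 1 <= x -> 0 < s ->
  gi x s <= exp ((x - 1) * ln (2 * x)) * exp (- s / 2).
Proof.
  intros Hx Hs. unfold gi, Rpower. rewrite <- !exp_plus. apply exp_le'.
  pose proof (ln_le_sub1 (s / (2 * x))) as H.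
  assert (0 < s / (2 * x)) by (apply Rdiv_lt_0_compat; lra).
  specialize (H H0).
  unfold Rdiv in H. rewrite ln_mult in H by (auto; apply Rinv_0_lt_compat; lra).
  rewrite ln_Rinv in H by lra.
  assert (Hk : s * / (2 * x) * (x - 1) <= s / 2).
  { apply Rmult_le_reg_r with (2 * x); [lra|].
    replace (s * / (2 * x) * (x - 1) * (2 * x)) with (s * (x - 1)) by (field; lra).
    nra. }
  nra.
Qed.

Lemma is_RInt_exp_half a b :
  is_RInt (fun s => exp (- s / 2)) a b (2 * exp (- a / 2) - 2 * exp (- b / 2)).
Proof.
  replace (2 * exp (- a / 2) - 2 * exp (- b / 2)) with
    (minus ((fun s => -2 * exp (- s / 2)) b) ((fun s => -2 * exp (- s / 2)) a))
    by (unfold minus, plus, opp; simpl; ring).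
  apply (is_RInt_derive (V:=R_CompleteNormedModule) (fun s => -2 * exp (- s / 2))).
  - intros s _. auto_derive; auto. unfold Rdiv. field.
  - intros s0 _. apply (ex_derive_continuous (K:=R_AbsRing) (V:=R_NormedModule)). auto_derive. auto.
Qed.

Lemma gi_RInt_bound x a b : 1 <= x -> 0 < a -> a < b ->
  RInt (gi x) a b <= 2 * exp ((x - 1) * ln (2 * x)).
Proof.
  intros Hx Ha Hab. set (K := exp ((x - 1) * ln (2 * x))).
  assert (HI := is_RInt_scal _ _ _ K _ (is_RInt_exp_half a b)).
  assert (Hr : is_RInt (gi x) a b (RInt (gi x) a b)).
  { apply (RInt_correct (V:=R_CompleteNormedModule)). apply exR_pos.
    intros; apply gi_cont; auto. lra. lra. }
  assert (H := is_RInt_le _ _ _ _ _ _ (Rlt_le _ _ Hab) Hr HI).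
  unfold scal in H; simpl in H; unfold mult in H; simpl in H.
  eapply Rle_trans; [apply H|].
  - intros s Hs. apply gi_bound; lra.
  - assert (exp (- a / 2) <= 1).
    { rewrite <- exp_0. apply exp_le'. lra. }
    pose proof (exp_pos (- b / 2)). assert (0 < K) by apply exp_pos. nra.
Qed.

Lemma Gamma_spec x : 1 <= x ->
  is_RInt_gen (gi x) (at_right 0) (Rbar_locally p_infty) (Gamma x) /\
  (forall a b, 0 < a -> a < b -> RInt (gi x) a b <= Gamma x) /\
  (forall M', (forall a b, 0 < a -> a < b -> RInt (gi x) a b <= M') -> Gamma x <= M').
Proof.
  intros Hx.
  destruct (gen_exists (gi x) (gi_cont x) (fun s _ => gi_pos x s) _
     (fun a b Ha Hab => gi_RInt_bound x a b Hx Ha Hab)) as [l [H1 [H2 H3]]].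
  assert (E : Gamma x = l).
  { unfold Gamma. apply (is_RInt_gen_unique (V:=R_CompleteNormedModule)). exact H1. }
  rewrite E. auto.
Qed.

Lemma Gamma_pos x : 1 <= x -> 0 < Gamma x.
Proof.
  intros Hx. destruct (Gamma_spec x Hx) as [_ [H _]].
  eapply Rlt_le_trans; [|apply (H 1 2); lra].
  assert (Hr : is_RInt (gi x) 1 2 (RInt (gi x) 1 2)).
  { apply (RInt_correct (V:=R_CompleteNormedModule)). apply exR_pos.
    intros; apply gi_cont; auto. lra. lra. }
  assert (Hc := is_RInt_const (V:=R_NormedModule) 1 2 (exp (-2))).
  assert (H' := is_RInt_le _ _ _ _ _ _ (Rlt_le 1 2 ltac:(lra)) Hc Hr).
  unfold scal in H'; simpl in H'; unfold mult in H'; simpl in H'.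
  eapply Rlt_le_trans; [|apply H'].
  - pose proof (exp_pos (-2)). lra.
  - intros s Hs. unfold gi, Rpower.
    assert (0 <= ln s) by (rewrite <- ln_1; apply ln_le; lra).
    rewrite <- exp_plus. apply exp_le'. nra.
Qed.

Lemma conv_exp u v lam : 0 <= lam <= 1 ->
  exp (lam * u + (1 - lam) * v) <= lam * exp u + (1 - lam) * exp v.
Proof.
  intros Hl. set (m := lam * u + (1 - lam) * v).
  assert (Eu : exp u = exp m * exp (u - m)) by (rewrite <- exp_plus; f_equal; ring).
  assert (Ev : exp v = exp m * exp (v - m)) by (rewrite <- exp_plus; f_equal; ring).
  pose proof (exp_ineq1_le (u - m)). pose proof (exp_ineq1_le (v - m)).
  pose proof (exp_pos m).
  rewrite Eu, Ev.
  assert (lam * (exp m * exp (u - m)) >= lam * (exp m * (1 + (u - m)))) by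
    (apply Rle_ge, Rmult_le_compat_l; [lra|]; apply Rmult_le_compat_l; lra).
  assert ((1 - lam) * (exp m * exp (v - m)) >= (1 - lam) * (exp m * (1 + (v - m)))) by
    (apply Rle_ge, Rmult_le_compat_l; [lra|]; apply Rmult_le_compat_l; lra).
  assert (lam * (exp m * (1 + (u - m))) + (1 - lam) * (exp m * (1 + (v - m))) = exp m)
    by (unfold m; ring).
  lra.
Qed.

Lemma Gamma_logconv x z lam : 1 <= x -> 1 <= z -> 0 <= lam <= 1 ->
  ln (Gamma (lam * x + (1 - lam) * z)) <= lam * ln (Gamma x) + (1 - lam) * ln (Gamma z).
Proof.
  intros Hx Hz Hl.
  set (y := lam * x + (1 - lam) * z).
  assert (Hy : 1 <= y) by (unfold y; nra).
  set (A := Gamma x). set (B := Gamma z).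
  assert (HA : 0 < A) by (apply Gamma_pos; auto).
  assert (HB : 0 < B) by (apply Gamma_pos; auto).
  set (K := lam * ln A + (1 - lam) * ln B).
  rewrite <- (ln_exp K). apply ln_le. apply Gamma_pos; auto.
  destruct (Gamma_spec y Hy) as [_ [_ H3]]. apply H3.
  intros a b Ha Hab.
  destruct (Gamma_spec x Hx) as [_ [Sx _]]. destruct (Gamma_spec z Hz) as [_ [Sz _]].
  specialize (Sx a b Ha Hab). specialize (Sz a b Ha Hab). fold A in Sx. fold B in Sz.
  assert (Hr : forall w, is_RInt (gi w) a b (RInt (gi w) a b)).
  { intro w. apply (RInt_correct (V:=R_CompleteNormedModule)). apply exR_pos.
    intros; apply gi_cont; auto. lra. lra. }
  assert (HI := is_RInt_scal _ _ _ (exp K) _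
     (is_RInt_plus _ _ _ _ _ _ (is_RInt_scal _ _ _ (lam / A) _ (Hr x))
                                  (is_RInt_scal _ _ _ ((1 - lam) / B) _ (Hr z)))).
  assert (H := is_RInt_le _ _ _ _ _ _ (Rlt_le _ _ Hab) (Hr y) HI).
  unfold scal, plus in H; simpl in H; unfold mult in H; simpl in H.
  eapply Rle_trans; [apply H|].
  - intros s Hs. unfold gi, Rpower.
    pose proof (conv_exp ((x - 1) * ln s - s - ln A) ((z - 1) * ln s - s - ln B) lam Hl) as C.
    replace (lam * ((x - 1) * ln s - s - ln A) + (1 - lam) * ((z - 1) * ln s - s - ln B))
      with ((y - 1) * ln s + - s + - K) in C by (unfold y, K; ring).
    assert (E1 : exp ((x - 1) * ln s - s - ln A) = exp ((x - 1) * ln s) * exp (- s) * / A).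
    { replace ((x - 1) * ln s - s - ln A) with ((x - 1) * ln s + - s + - ln A) by ring.
      rewrite !exp_plus, (exp_Ropp (ln A)), exp_ln; auto. }
    assert (E2 : exp ((z - 1) * ln s - s - ln B) = exp ((z - 1) * ln s) * exp (- s) * / B).
    { replace ((z - 1) * ln s - s - ln B) with ((z - 1) * ln s + - s + - ln B) by ring.
      rewrite !exp_plus, (exp_Ropp (ln B)), exp_ln; auto. }
    assert (E3 : exp ((y - 1) * ln s + - s + - K) = exp ((y - 1) * ln s) * exp (- s) * / exp K).
    { rewrite !exp_plus, (exp_Ropp K); auto. }
    rewrite E1, E2, E3 in C.
    pose proof (exp_pos K).
    apply Rmult_le_reg_r with (/ exp K). apply Rinv_0_lt_compat; auto.
    replace (exp K * (lam / A * (exp ((x - 1) * ln s) * exp (- s)) +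
       (1 - lam) / B * (exp ((z - 1) * ln s) * exp (- s))) * / exp K) with
      (lam * (exp ((x - 1) * ln s) * exp (- s) * / A) +
       (1 - lam) * (exp ((z - 1) * ln s) * exp (- s) * / B)) by (field; lra).
    exact C.
  - pose proof (exp_pos K).
    assert (lam / A * RInt (gi x) a b <= lam).
    { unfold Rdiv. rewrite Rmult_assoc. rewrite <- (Rmult_1_r lam) at 2.
      apply Rmult_le_compat_l; [lra|]. apply Rmult_le_reg_l with A; auto.
      rewrite <- Rmult_assoc, Rinv_r, Rmult_1_l, Rmult_1_r; lra. }
    assert ((1 - lam) / B * RInt (gi z) a b <= 1 - lam).
    { unfold Rdiv. rewrite Rmult_assoc. rewrite <- (Rmult_1_r (1 - lam)) at 2.
      apply Rmult_le_compat_l; [lra|]. apply Rmult_le_reg_l with B; auto.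
      rewrite <- Rmult_assoc, Rinv_r, Rmult_1_l, Rmult_1_r; lra. }
    nra.
Qed.

Definition phi x s := Rpower s x * exp (- s).

Lemma phi_gi x s : phi x s = gi (x + 1) s.
Proof. unfold phi, gi. replace (x + 1 - 1) with x by ring. reflexivity. Qed.

Lemma ball0 (e : posreal) y : Rabs y < e -> ball 0 e y.
Proof.
  intros H. unfold ball; simpl; unfold AbsRing_ball, abs, minus, plus, opp; simpl.
  rewrite Ropp_0, Rplus_0_r. exact H.
Qed.

Lemma ball0' (e : posreal) y : ball 0 e y -> Rabs y < e.
Proof.
  unfold ball; simpl; unfold AbsRing_ball, abs, minus, plus, opp; simpl.
  rewrite Ropp_0, Rplus_0_r. auto.
Qed.

Lemma phi_lim0 x : 1 <= x -> filterlim (phi x) (at_right 0) (locally 0).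
Proof.
  intros Hx P [eps He]. unfold filtermap.
  assert (Hd : 0 < Rmin eps 1) by (apply Rmin_glb_lt; [destruct eps; simpl; lra| lra]).
  exists (mkposreal _ Hd). intros y Hy Hy0. simpl in Hy. apply He. apply ball0.
  apply (ball0' (mkposreal _ Hd)) in Hy. simpl in Hy.
  assert (Hy1 : y < Rmin eps 1) by (apply Rabs_def2 in Hy; lra).
  assert (y < eps) by (pose proof (Rmin_l eps 1); lra).
  assert (y < 1) by (pose proof (Rmin_r eps 1); lra).
  unfold phi, Rpower. rewrite Rabs_right by (left; apply Rmult_lt_0_compat; apply exp_pos).
  assert (ln y <= 0) by (rewrite <- ln_1; apply ln_le; lra).
  assert (exp (x * ln y) <= y).
  { rewrite <- (exp_ln y) at 2 by lra. apply exp_le'. nra. }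
  assert (exp (- y) <= 1) by (rewrite <- exp_0; apply exp_le'; lra).
  pose proof (exp_pos (x * ln y)). pose proof (exp_pos (- y)). nra.
Qed.

Lemma phi_liminf x : 1 <= x -> filterlim (phi x) (Rbar_locally p_infty) (locally 0).
Proof.
  intros Hx P [eps He]. unfold filtermap. simpl.
  set (K := exp ((x + 1 - 1) * ln (2 * (x + 1)))).
  assert (HK : 0 < K) by apply exp_pos.
  assert (He0 : 0 < eps) by (destruct eps; auto).
  exists (Rmax 0 (- 2 * ln (eps / K))). intros s Hs. apply He. apply ball0.
  assert (Hs0 : 0 < s) by (pose proof (Rmax_l 0 (- 2 * ln (eps / K))); lra).
  assert (Hs1 : - 2 * ln (eps / K) < s) by (pose proof (Rmax_r 0 (- 2 * ln (eps / K))); lra).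
  rewrite phi_gi. rewrite Rabs_right by (apply Rle_ge, gi_pos).
  eapply Rle_lt_trans; [apply gi_bound; lra|]. fold K.
  assert (exp (- s / 2) < eps / K).
  { rewrite <- (exp_ln (eps / K)) by (apply Rdiv_lt_0_compat; lra).
    apply exp_increasing. lra. }
  apply Rmult_lt_reg_r with (/ K). apply Rinv_0_lt_compat; auto.
  replace (K * exp (- s / 2) * / K) with (exp (- s / 2)) by (field; lra). exact H.
Qed.

Lemma phi_derive x s : 0 < s -> is_derive (phi x) s (x * gi x s - gi (x + 1) s).
Proof.
  intros Hs. unfold phi, gi, Rpower. auto_derive; [exact Hs|].
  replace (x + 1 - 1) with x by ring.
  assert (E : exp ((x - 1) * ln s) = exp (x * ln s) * / s).
  { replace ((x - 1) * ln s) with (x * ln s + - ln s) by ring.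
    rewrite exp_plus, exp_Ropp, exp_ln; auto. }
  rewrite E. field. lra.
Qed.

Lemma pos_prod (P : R -> R -> Prop) :
  (forall a b, 0 < a -> 0 < b -> P a b) ->
  filter_prod (at_right 0) (Rbar_locally p_infty) (fun ab => P (fst ab) (snd ab)).
Proof.
  intros H. apply Filter_prod with (fun a => 0 < a) (fun b => 0 < b).
  - exists (mkposreal 1 Rlt_0_1). intros; auto.
  - exists 0. auto.
  - intros a b Ha Hb. simpl. auto.
Qed.

Lemma Gamma_succ x : 1 <= x -> Gamma (x + 1) = x * Gamma x.
Proof.
  intros Hx.
  set (g := fun s => minus (scal x (gi x s)) (gi (x + 1) s)).
  assert (HD : forall s, 0 < s -> Derive (phi x) s = g s).
  { intros s Hs. apply is_derive_unique. unfold g, minus, plus, opp, scal; simpl.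
    unfold mult; simpl. replace (x * gi x s + - gi (x + 1) s) with (x * gi x s - gi (x + 1) s) by ring.
    apply phi_derive; auto. }
  assert (Hgc : forall s, 0 < s -> continuous g s).
  { intros s Hs. unfold g. apply (continuous_minus (K:=R_AbsRing) (V:=R_NormedModule)).
    apply (continuous_scal_r (K:=R_AbsRing) (V:=R_NormedModule)). apply gi_cont; auto.
    apply gi_cont; lra. }
  assert (H1 : is_RInt_gen (Derive (phi x)) (at_right 0) (Rbar_locally p_infty) (0 - 0)).
  { apply is_RInt_gen_Derive.
    - apply (pos_prod (fun a b => forall y, Rmin a b <= y <= Rmax a b -> ex_derive (phi x) y)).
      intros a b Ha Hb y Hy. exists (x * gi x y - gi (x + 1) y). apply phi_derive.
      assert (0 < Rmin a b) by (apply Rmin_glb_lt; auto). lra.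
    - apply (pos_prod (fun a b => forall y, Rmin a b <= y <= Rmax a b -> continuous (Derive (phi x)) y)).
      intros a b Ha Hb y Hy.
      assert (Hy0 : 0 < y) by (assert (0 < Rmin a b) by (apply Rmin_glb_lt; auto); lra).
      apply (continuous_ext_loc _ g). 
      + assert (Hd : 0 < y / 2) by lra.
        exists (mkposreal _ Hd). intros z Hz. simpl in Hz.
        unfold ball in Hz; simpl in Hz; unfold AbsRing_ball, abs, minus, plus, opp in Hz; simpl in Hz.
        apply Rabs_def2 in Hz. symmetry. apply HD. lra.
      + apply Hgc; auto.
    - apply phi_lim0; auto.
    - apply phi_liminf; auto. }
  assert (H2 : is_RInt_gen g (at_right 0) (Rbar_locally p_infty) 0).
  { replace (0 - 0) with 0 in H1 by ring.
    apply (is_RInt_gen_ext (Derive (phi x))); [| exact H1].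
    apply (pos_prod (fun a b => forall y, Rmin a b < y < Rmax a b -> Derive (phi x) y = g y)).
    intros a b Ha Hb y Hy. apply HD.
    assert (0 < Rmin a b) by (apply Rmin_glb_lt; auto). lra. }
  destruct (Gamma_spec x Hx) as [Gx _].
  destruct (Gamma_spec (x + 1) ltac:(lra)) as [Gx1 _].
  assert (H3 := is_RInt_gen_minus _ _ _ _ (is_RInt_gen_scal _ x _ Gx) Gx1).
  fold g in H3.
  assert (U1 := is_RInt_gen_unique (V:=R_CompleteNormedModule) _ _ H2).
  assert (U2 := is_RInt_gen_unique (V:=R_CompleteNormedModule) _ _ H3).
  change (RInt_gen g (at_right 0) (Rbar_locally p_infty) = minus (scal x (Gamma x)) (Gamma (x + 1))) in U2.
  rewrite U1 in U2. unfold minus, plus, opp, scal in U2; simpl in U2; unfold mult in U2; simpl in U2.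
  lra.
Qed.


Definition Lg s := ln (Gamma s).

Lemma Lg_succ s : 1 <= s -> Lg (s + 1) = Lg s + ln s.
Proof.
  intros Hs. unfold Lg. rewrite Gamma_succ by auto.
  rewrite ln_mult; [ring | lra | apply Gamma_pos; auto].
Qed.

Lemma Lg_shift s m : 1 <= s ->
  Lg (s + INR (S m)) = Lg s + sum_f_R0 (fun k => ln (s + INR k)) m.
Proof.
  intros Hs. induction m.
  - simpl. rewrite Rplus_0_r. apply Lg_succ; auto.
  - rewrite S_INR. replace (s + (INR (S m) + 1)) with (s + INR (S m) + 1) by ring.
    rewrite Lg_succ by (pose proof (pos_INR (S m)); lra).
    rewrite IHm. cbn [sum_f_R0]. ring.
Qed.

Lemma Lg_chord x y z : 1 <= x -> x < z -> x <= y <= z ->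
  (z - x) * Lg y <= (z - y) * Lg x + (y - x) * Lg z.
Proof.
  intros Hx Hxz Hy.
  set (lam := (z - y) / (z - x)).
  assert (Hl : 0 <= lam <= 1).
  { unfold lam. split.
    - apply Rmult_le_pos; [lra| left; apply Rinv_0_lt_compat; lra].
    - apply Rmult_le_reg_r with (z - x); [lra|]. unfold Rdiv.
      rewrite Rmult_assoc, Rinv_l by lra. lra. }
  pose proof (Gamma_logconv x z lam Hx ltac:(lra) Hl) as C.
  replace (lam * x + (1 - lam) * z) with y in C by (unfold lam; field; lra).
  fold (Lg y) (Lg x) (Lg z) in C.
  apply Rmult_le_compat_l with (r := z - x) in C; [|lra].
  replace ((z - x) * (lam * Lg x + (1 - lam) * Lg z)) with
    ((z - y) * Lg x + (y - x) * Lg z) in C by (unfold lam; field; lra).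
  exact C.
Qed.

Lemma ln_diff_le a h : 0 < a -> 0 <= h -> ln (a + h) - ln a <= h / a.
Proof.
  intros Ha Hh.
  assert (E : ln (a + h) - ln a = ln ((a + h) * / a)).
  { rewrite ln_mult, ln_Rinv; try lra. apply Rinv_0_lt_compat; lra. }
  rewrite E. eapply Rle_trans; [apply ln_le_sub1|].
  - apply Rmult_lt_0_compat; [lra| apply Rinv_0_lt_compat; lra].
  - right. field. lra.
Qed.

Definition Hn m := sum_f_R0 (fun k => / INR (S k)) m.

Lemma sum_diff_le t h m : 1 < t -> 0 <= h ->
  sum_f_R0 (fun k => ln (t + h + INR k)) m - sum_f_R0 (fun k => ln (t + INR k)) m
  <= h * (Hn m - 1 + / t).
Proof.
  intros Ht Hh. induction m.
  - unfold Hn. simpl. rewrite !Rplus_0_r.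
    replace (h * (/ 1 - 1 + / t)) with (h / t) by (field; lra).
    apply ln_diff_le; lra.
  - unfold Hn in *. cbn [sum_f_R0].
    pose proof (pos_INR (S m)).
    assert (ln (t + h + INR (S m)) - ln (t + INR (S m)) <= h * / INR (S (S m))).
    { replace (t + h + INR (S m)) with (t + INR (S m) + h) by ring.
      eapply Rle_trans; [apply ln_diff_le; lra|].
      unfold Rdiv. apply Rmult_le_compat_l; auto.
      apply Rinv_le_contravar; rewrite (S_INR (S m)); lra. }
    nra.
Qed.

Lemma e_upper m : Hn m - ln (INR (S m)) <= 1.
Proof.
  unfold Hn. induction m.
  - simpl. rewrite ln_1. lra.
  - cbn [sum_f_R0].
    assert (HS : 0 < INR (S m)) by (apply lt_0_INR; lia).
    assert (E2 : INR (S (S m)) = INR (S m) + 1) by apply S_INR.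
    assert (ln (INR (S m) / INR (S (S m))) <= INR (S m) / INR (S (S m)) - 1).
    { apply ln_le_sub1. apply Rdiv_lt_0_compat; lra. }
    unfold Rdiv in H. rewrite ln_mult, ln_Rinv in H by (try apply Rinv_0_lt_compat; lra).
    replace (INR (S m) * / INR (S (S m)) - 1) with (- / INR (S (S m))) in H by (rewrite E2; field; lra).
    lra.
Qed.

Lemma real_Lim_ge (u : nat -> R) a b : (forall n, a <= u n <= b) -> a <= real (Lim_seq u).
Proof. intros H. apply (real_Lim_bounds u a b H). Qed.

Lemma digamma_lower t m : 1 < t -> 1 - / t - (Hn m - ln (INR (S m))) <= digamma t.
Proof.
  intros Ht. unfold digamma, Derive, Lim.
  apply (real_Lim_ge _ _ (ln t)). intro n. simpl Rbar_loc_seq.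
  set (h := 0 + / (INR n + 1)).
  assert (Hh : 0 < h <= 1).
  { unfold h. pose proof (pos_INR n). rewrite Rplus_0_l. split.
    apply Rinv_0_lt_compat; lra. rewrite <- Rinv_1. apply Rinv_le_contravar; lra. }
  fold (Lg (t + h)) (Lg t).
  split.
  - apply Rmult_le_reg_r with h; [lra|]. unfold Rdiv. rewrite Rmult_assoc, Rinv_l by lra.
    rewrite Rmult_1_r.
    pose proof (Lg_shift (t + h) m ltac:(lra)) as S1.
    pose proof (Lg_shift t m ltac:(lra)) as S0.
    pose proof (sum_diff_le t h m Ht ltac:(lra)) as D.
    pose proof (Lg_chord (t + INR m) (t + INR (S m)) (t + INR (S m) + h)) as C.
    pose proof (pos_INR m).
    rewrite S_INR in C, S1, S0.
    specialize (C ltac:(lra) ltac:(lra) ltac:(lra)).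
    replace (t + (INR m + 1)) with (t + INR m + 1) in C, S0 by ring.
    replace (t + h + (INR m + 1)) with (t + INR m + 1 + h) in S1 by ring.
    rewrite Lg_succ in C, S0 by lra.
    assert (ln (INR (S m)) <= ln (t + INR m)).
    { apply ln_le. apply lt_0_INR; lia. rewrite S_INR; lra. }
    replace (t + INR m + 1 + h - (t + INR m)) with (1 + h) in C by ring.
    replace (t + INR m + 1 + h - (t + INR m + 1)) with h in C by ring.
    replace (t + INR m + 1 - (t + INR m)) with 1 in C by ring.
    nra.
  - apply Rmult_le_reg_r with h; [lra|]. unfold Rdiv. rewrite Rmult_assoc, Rinv_l by lra.
    rewrite Rmult_1_r.
    pose proof (Lg_chord t (t + h) (t + 1) ltac:(lra) ltac:(lra) ltac:(lra)) as C.
    rewrite Lg_succ in C by lra.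
    replace (t + 1 - t) with 1 in C by ring.
    replace (t + h - t) with h in C by ring.
    replace (t + 1 - (t + h)) with (1 - h) in C by ring.
    nra.
Qed.

Lemma gamma_part t : 1 < t -> 0 < euler_gamma + digamma t.
Proof.
  intros Ht.
  assert (H : 1 - / t - digamma t <= euler_gamma).
  { unfold euler_gamma. apply (real_Lim_ge _ _ 1). intro m. split.
    - pose proof (digamma_lower t m Ht). unfold Hn in H. lra.
    - apply e_upper. }
  assert (/ t < 1). { rewrite <- Rinv_1. apply Rinv_lt_contravar; lra. }
  lra.
Qed.

Theorem lemma3p3 (a b q t : R) :
  0 < a -> 0 < b -> 0 < q < 1 -> 1 < t ->
  a * euler_gamma - b * ln (1 - q) + a * digamma t - b * qdigamma q t > 0.
Proof.
  intros Ha Hb Hq Ht.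
  pose proof (gamma_part t Ht).
  pose proof (qdigamma_le q t Hq ltac:(lra)).
  assert (0 < a * (euler_gamma + digamma t)) by (apply Rmult_lt_0_compat; auto).
  assert (0 <= b * (- ln (1 - q) - qdigamma q t)) by (apply Rmult_le_pos; lra).
  nra.
Qed.
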